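(* Let $U\subset\mathbb{C}$ be simply connected and let $F,G$ be holomorphic on $U$ with $F$ nowhere zero. Put $\phi=(F,\mathrm{i}F,-FG)$, and for $\theta\in\mathbb{R}$ let $$\mathbf{x}_\theta(z)=\cos\theta\,\mathrm{Re}\int_{z_0}^z\phi\,\mathrm{d}w+\sin\theta\,\mathrm{Im}\int_{z_0}^z\phi\,\mathrm{d}w=\mathrm{Re}\int_{z_0}^z\mathrm{e}^{-\mathrm{i}\theta}\phi\,\mathrm{d}w.$$ Then: (i) All $\mathbf{x}_\theta$ have the same first fundamental form $|F|^2|\mathrm{d}z|^2$. (ii) At a point $z$, the direction $\mathbf{v}=v_1\partial_u+v_2\partial_v$ is asymptotic for $\mathbf{x}_\theta$ if and only if $\mathrm{e}^{-\mathrm{i}\theta}F(z)G'(z)(v_1+\mathrm{i}v_2)^2\in\mathrm{i}\mathbb{R}$. (iii) At a point $z$ where $F(z)G'(z)\neq0$, the direction $\mathbf{v}$ is a principal direction of $\mathbf{x}_\theta$ if and only if $\mathrm{e}^{-\mathrm{i}\theta}F(z)G'(z)(v_1+\mathrm{i}v_2)^2\in\mathbb{R}$. (iv) Consequently, at such points, asymptotic directions of $\mathbf{x}_\theta$ are principal directions of the conjugate surface $\mathbf{x}_{\theta+\pi/2}$, and principal directions of $\mathbf{x}_\theta$ are asymptotic directions of $\mathbf{x}_{\theta+\pi/2}$.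
   Context: $\mathbb{I}^3$ is $\mathbb{R}^3$ with the degenerate metric $\langle a,b\rangle=a^1b^1+a^2b^2$, and $z=u+\mathrm{i}v$. The first fundamental form has coefficients $g_{ij}=\langle\mathbf{x}_i,\mathbf{x}_j\rangle$. The minimal normal $\mathbf{N}_m$ is the unique vector $(a,b,1)$ that is Euclidean-orthogonal to $\mathbf{x}_u,\mathbf{x}_v$, and the second fundamental form has coefficients $h_{ij}=\mathbf{x}_{ij}\cdot\mathbf{N}_m$. A direction $\mathbf{v}$ is asymptotic if $\mathrm{II}(\mathbf{v},\mathbf{v})=0$. It is principal if it is an eigenvector of the shape operator $g^{-1}h$, i.e. a critical direction of $\mathrm{II}(\mathbf{v},\mathbf{v})/\mathrm{I}(\mathbf{v},\mathbf{v})$. The surface $\mathbf{x}_{\theta+\pi/2}$ is called the conjugate of $\mathbf{x}_\theta$. *)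

(* Defs.v *)
From Stdlib Require Import Reals ClassicalEpsilon.
From Coquelicot Require Export Coquelicot.
Open Scope R_scope.

Definition vec3 := (R * R * R)%type.
Definition v1c (a : vec3) : R := fst (fst a).
Definition v2c (a : vec3) : R := snd (fst a).
Definition v3c (a : vec3) : R := snd a.

Definition edot (a b : vec3) : R := v1c a * v1c b + v2c a * v2c b + v3c a * v3c b.
(* degenerate isotropic metric of I^3 *)
Definition idot (a b : vec3) : R := v1c a * v1c b + v2c a * v2c b.

Definition holomorphic_on (U : C -> Prop) (f : C -> C) : Prop :=
  forall z, U z -> ex_derive (K := C_AbsRing) f z.

Definition pu (x : R -> R -> vec3) : R -> R -> vec3 := fun u v =>
  (Derive (fun t => v1c (x t v)) u, Derive (fun t => v2c (x t v)) u,
   Derive (fun t => v3c (x t v)) u).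
Definition pv (x : R -> R -> vec3) : R -> R -> vec3 := fun u v =>
  (Derive (fun t => v1c (x u t)) v, Derive (fun t => v2c (x u t)) v,
   Derive (fun t => v3c (x u t)) v).

Definition g11 x u v := idot (pu x u v) (pu x u v).
Definition g12 x u v := idot (pu x u v) (pv x u v).
Definition g22 x u v := idot (pv x u v) (pv x u v).

Definition is_minimal_normal (x : R -> R -> vec3) (u v : R) (N : vec3) : Prop :=
  v3c N = 1 /\ edot N (pu x u v) = 0 /\ edot N (pv x u v) = 0.
Definition minimal_normal (x : R -> R -> vec3) (u v : R) : vec3 :=
  epsilon (inhabits ((0, 0, 1) : vec3)) (is_minimal_normal x u v).

Definition h11 x u v := edot (pu (pu x) u v) (minimal_normal x u v).
Definition h12 x u v := edot (pv (pu x) u v) (minimal_normal x u v).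
Definition h22 x u v := edot (pv (pv x) u v) (minimal_normal x u v).

Definition II x u v (a b : R) : R :=
  h11 x u v * a ^ 2 + 2 * h12 x u v * a * b + h22 x u v * b ^ 2.

Definition asymptotic x u v (a b : R) : Prop := II x u v a b = 0.

(* shape operator S = g^{-1} h, written out entrywise *)
Definition detg x u v := g11 x u v * g22 x u v - g12 x u v ^ 2.
Definition S11 x u v := (g22 x u v * h11 x u v - g12 x u v * h12 x u v) / detg x u v.
Definition S12 x u v := (g22 x u v * h12 x u v - g12 x u v * h22 x u v) / detg x u v.
Definition S21 x u v := (- g12 x u v * h11 x u v + g11 x u v * h12 x u v) / detg x u v.
Definition S22 x u v := (- g12 x u v * h12 x u v + g11 x u v * h22 x u v) / detg x u v.

Definition principal x u v (a b : R) : Prop :=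
  (a, b) <> (0, 0) /\
  exists lam : R, S11 x u v * a + S12 x u v * b = lam * a /\
                  S21 x u v * a + S22 x u v * b = lam * b.

(* x_theta(u,v) = cos th Re Phi(z) + sin th Im Phi(z),  z = u + i v,
   where Phi = (P1,P2,P3) is a primitive of phi *)
Definition xsurf (th : R) (P1 P2 P3 : C -> C) : R -> R -> vec3 := fun u v =>
  (cos th * Re (P1 (u, v)) + sin th * Im (P1 (u, v)),
   cos th * Re (P2 (u, v)) + sin th * Im (P2 (u, v)),
   cos th * Re (P3 (u, v)) + sin th * Im (P3 (u, v))).

Definition emi (th : R) : C := (cos th, - sin th).

(* Main.v *)
Require Import Defs.
From Stdlib Require Import Reals.
From Coquelicot Require Import Coquelicot.
From Stdlib Require Import Lra ClassicalEpsilon.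
Open Scope R_scope.

Lemma Rabs_snd_le (w : C) : Rabs (snd w) <= Cmod w.
Proof. pose proof (Rmax_Cmod w). pose proof (Rmax_r (Rabs (fst w)) (Rabs (snd w))). lra. Qed.
Lemma Rabs_fst_le (w : C) : Rabs (fst w) <= Cmod w.
Proof. pose proof (Rmax_Cmod w). pose proof (Rmax_l (Rabs (fst w)) (Rabs (snd w))). lra. Qed.

Lemma absR (x : R) : @abs R_AbsRing x = Rabs x. Proof. reflexivity. Qed.
Lemma multR (x y : R) : @mult R_AbsRing x y = x * y. Proof. reflexivity. Qed.

Lemma line_gen (f : C -> C) (z l : C) (p : R -> C) (d : C) (x0 : R)
  (pz : p x0 = z)
  (pm : forall t, (p t - z)%C = (RtoC (t - x0) * d)%C)
  (dn : Cmod d = 1) :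
  is_derive (K:=C_AbsRing) f z l ->
  is_derive (fun t => fst (f (p t))) x0 (fst (d * l)%C) /\
  is_derive (fun t => snd (f (p t))) x0 (snd (d * l)%C).
Proof.
intros [_ H].
specialize (H z (fun P H => H)).
assert (K : forall eps : posreal, exists dl : posreal, forall t, Rabs (t - x0) < dl ->
   Cmod (f (p t) - f z - RtoC (t - x0) * (d * l))%C <= eps * Rabs (t - x0)).
{ intros eps. destruct (H eps) as [e He].
  exists e. intros t Ht.
  assert (Hb : Cmod (p t - z)%C < e).
  { rewrite pm, Cmod_mult, dn, Cmod_R, Rmult_1_r. exact Ht. }
  specialize (He (p t) Hb).
  assert (He' : Cmod (f (p t) - f z - (p t - z) * l)%C <= eps * Cmod (p t - z)%C) by exact He.
  rewrite pm, Cmod_mult, dn, Cmod_R, Rmult_1_r, <- Cmult_assoc in He'. exact He'. }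
split; (split; [apply is_linear_scal_l|]);
intros x Hx; apply (is_filter_lim_locally_unique (K:=R_AbsRing) (V:=AbsRing_NormedModule R_AbsRing)) in Hx; subst x;
intros eps; destruct (K eps) as [dl Hdl]; exists dl; intros t Ht;
specialize (Hdl t Ht);
unfold minus, plus, opp, scal, norm, mult in *; simpl in *;
change (abs (t + - x0)) with (Rabs (t - x0)); rewrite pz.
- eapply Rle_trans; [|exact Hdl]. eapply Rle_trans; [|apply Rabs_fst_le].
  right. rewrite absR, multR. f_equal. simpl. ring.
- eapply Rle_trans; [|exact Hdl]. eapply Rle_trans; [|apply Rabs_snd_le].
  right. rewrite absR, multR. f_equal. simpl. ring.
Qed.

Lemma line_u (f : C -> C) (u v : R) (l : C) :
  is_derive (K:=C_AbsRing) f (u, v) l ->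
  is_derive (fun t => fst (f (t, v))) u (fst l) /\
  is_derive (fun t => snd (f (t, v))) u (snd l).
Proof.
intros H.
destruct (line_gen f (u,v) l (fun t => (t, v)) (RtoC 1) u eq_refl) as [H1 H2].
- intros t. apply injective_projections; simpl; ring.
- rewrite Cmod_R. apply Rabs_R1.
- exact H.
- replace (fst l) with (fst (RtoC 1 * l)%C) by (simpl; ring).
  replace (snd l) with (snd (RtoC 1 * l)%C) by (simpl; ring). split; assumption.
Qed.

Lemma line_v (f : C -> C) (u v : R) (l : C) :
  is_derive (K:=C_AbsRing) f (u, v) l ->
  is_derive (fun t => fst (f (u, t))) v (fst (Ci * l)%C) /\
  is_derive (fun t => snd (f (u, t))) v (snd (Ci * l)%C).
Proof.
intros H.
apply (line_gen f (u,v) l (fun t => (u, t)) Ci v eq_refl).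
- intros t. apply injective_projections; simpl; ring.
- unfold Cmod, Ci; simpl. replace (0 * (0 * 1) + 1 * (1 * 1)) with 1 by ring. apply sqrt_1.
- exact H.
Qed.

Definition comp (th : R) (w : C) : R := cos th * fst w + sin th * snd w.

Lemma comp_der (f1 f2 : R -> R) x a b th :
  is_derive f1 x a -> is_derive f2 x b ->
  is_derive (fun t => cos th * f1 t + sin th * f2 t) x (cos th * a + sin th * b).
Proof.
intros H1 H2. apply (is_derive_plus (fun t => cos th * f1 t) (fun t => sin th * f2 t)).
- apply is_derive_scal. exact H1.
- apply is_derive_scal. exact H2.
Qed.

Lemma DU (P : C -> C) s t q th :
  is_derive (K:=C_AbsRing) P (s, t) q ->
  Derive (fun r => cos th * Re (P (r, t)) + sin th * Im (P (r, t))) s = comp th q.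
Proof.
intros H. apply is_derive_unique. destruct (line_u P s t q H) as [H1 H2].
apply comp_der; assumption.
Qed.

Lemma DV (P : C -> C) s t q th :
  is_derive (K:=C_AbsRing) P (s, t) q ->
  Derive (fun r => cos th * Re (P (s, r)) + sin th * Im (P (s, r))) t = comp th (Ci * q)%C.
Proof.
intros H. apply is_derive_unique. destruct (line_v P s t q H) as [H1 H2].
apply comp_der; assumption.
Qed.

Lemma U_u (U : C -> Prop) u v : open U -> U (u, v) -> locally u (fun s => U (s, v)).
Proof.
intros HU Hz. destruct (HU (u, v) Hz) as [e He].
exists e. intros s Hs. apply He. split; [exact Hs | apply ball_center].
Qed.

Lemma U_v (U : C -> Prop) u v : open U -> U (u, v) -> locally v (fun s => U (u, s)).
Proof.
intros HU Hz. destruct (HU (u, v) Hz) as [e He].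
exists e. intros s Hs. apply He. split; [apply ball_center | exact Hs].
Qed.

Lemma tr1 Q z R : @is_derive C_AbsRing C_NormedModule Q z R -> @is_derive C_AbsRing (AbsRing_NormedModule C_AbsRing) Q z R.
Proof. intros [L D]. split. apply is_linear_scal_l. intros x Hx eps.
generalize (D x Hx eps). apply filter_imp. intros y Hy. exact Hy. Qed.
Lemma tr2 Q z R : @is_derive C_AbsRing (AbsRing_NormedModule C_AbsRing) Q z R -> @is_derive C_AbsRing C_NormedModule Q z R.
Proof. intros [L D]. split. apply is_linear_scal_l. intros x Hx eps.
generalize (D x Hx eps). apply filter_imp. intros y Hy. exact Hy. Qed.

Lemma Ci_der (Q : C -> C) z R :
  is_derive (K:=C_AbsRing) Q z R -> is_derive (K:=C_AbsRing) (fun w => Ci * Q w)%C z (Ci * R)%C.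
Proof.
intros H. apply tr2.
pose proof (is_derive_mult (K:=C_AbsRing) (fun _ => Ci) Q z (RtoC 0) R (is_derive_const _ _) (tr1 _ _ _ H) Cmult_comm) as H2.
replace (Ci * R)%C with (plus (mult (RtoC 0) (Q z)) (mult Ci R)). exact H2.
change ((0 * Q z + Ci * R)%C = (Ci * R)%C). ring.
Qed.

Section Second.
Variables (U : C -> Prop) (P Q : C -> C) (Rd : C) (th u v : R).
Hypothesis HU : open U.
Hypothesis Hz : U (u, v).
Hypothesis HP : forall z, U z -> is_derive (K:=C_AbsRing) P z (Q z).
Hypothesis HQ : is_derive (K:=C_AbsRing) Q (u, v) Rd.

Lemma DDuu : Derive (fun r => Derive (fun r0 => cos th * Re (P (r0, v)) + sin th * Im (P (r0, v))) r) u
  = comp th Rd.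
Proof.
rewrite (Derive_ext_loc _ (fun r => cos th * Re (Q (r, v)) + sin th * Im (Q (r, v)))).
- apply DU. exact HQ.
- generalize (U_u U u v HU Hz). apply filter_imp. intros s Hs. apply DU. apply HP. exact Hs.
Qed.

Lemma DDuv : Derive (fun r => Derive (fun r0 => cos th * Re (P (r0, r)) + sin th * Im (P (r0, r))) u) v
  = comp th (Ci * Rd)%C.
Proof.
rewrite (Derive_ext_loc _ (fun r => cos th * Re (Q (u, r)) + sin th * Im (Q (u, r)))).
- apply DV. exact HQ.
- generalize (U_v U u v HU Hz). apply filter_imp. intros s Hs. apply DU. apply HP. exact Hs.
Qed.

Lemma DDvv : Derive (fun r => Derive (fun r0 => cos th * Re (P (u, r0)) + sin th * Im (P (u, r0))) r) v
  = comp th (Ci * (Ci * Rd))%C.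
Proof.
rewrite (Derive_ext_loc _ (fun r => cos th * Re ((fun w => Ci * Q w)%C (u, r)) + sin th * Im ((fun w => Ci * Q w)%C (u, r)))).
- apply (DV (fun w => Ci * Q w)%C). apply Ci_der. exact HQ.
- generalize (U_v U u v HU Hz). apply filter_imp. intros s Hs. apply DV. apply HP. exact Hs.
Qed.
End Second.

Lemma data (U : C -> Prop) (F G P1 P2 P3 : C -> C) th u v :
  open U ->
  holomorphic_on U F -> holomorphic_on U G ->
  (forall z, U z -> F z <> 0%C) ->
  (forall z, U z ->
     is_derive (K := C_AbsRing) P1 z (F z) /\
     is_derive (K := C_AbsRing) P2 z (Ci * F z)%C /\
     is_derive (K := C_AbsRing) P3 z (- (F z * G z))%C) ->
  U (u, v) ->
  g11 (xsurf th P1 P2 P3) u v = fst (F (u,v)) ^ 2 + snd (F (u,v)) ^ 2 /\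
  g12 (xsurf th P1 P2 P3) u v = 0 /\
  g22 (xsurf th P1 P2 P3) u v = fst (F (u,v)) ^ 2 + snd (F (u,v)) ^ 2 /\
  h11 (xsurf th P1 P2 P3) u v = - comp th (F (u,v) * C_derive G (u,v))%C /\
  h12 (xsurf th P1 P2 P3) u v = - comp th (Ci * (F (u,v) * C_derive G (u,v)))%C /\
  h22 (xsurf th P1 P2 P3) u v = comp th (F (u,v) * C_derive G (u,v))%C.
Proof.
intros HUo HF HG HF0 HP Hz.
assert (HP1 : forall z, U z -> is_derive (K := C_AbsRing) P1 z (F z)) by (intros; apply HP; auto).
assert (HP2 : forall z, U z -> is_derive (K := C_AbsRing) P2 z ((fun w => Ci * F w)%C z)) by (intros; apply HP; auto).
assert (HP3 : forall z, U z -> is_derive (K := C_AbsRing) P3 z ((fun w => - (F w * G w))%C z)) by (intros; apply HP; auto).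
destruct (HP _ Hz) as [H1 [H2 H3]].
pose proof (C_derive_correct F (u,v) (RtoC 0) (HF _ Hz)) as HFd.
pose proof (C_derive_correct G (u,v) (RtoC 0) (HG _ Hz)) as HGd.
set (z := (u, v)) in *.
pose proof (Ci_der F z _ HFd) as HR2.
assert (HR3 : is_derive (K := C_AbsRing) (fun w => - (F w * G w))%C z
     (- (C_derive F z * G z + F z * C_derive G z))%C).
{ apply tr2.
  pose proof (is_derive_opp _ _ _ (is_derive_mult (K:=C_AbsRing) F G z _ _ (tr1 _ _ _ HFd) (tr1 _ _ _ HGd) Cmult_comm)) as H.
  exact H. }
set (x := xsurf th P1 P2 P3).
assert (Epu : pu x u v = (comp th (F z), comp th (Ci * F z)%C, comp th (- (F z * G z))%C)).
{ unfold pu, x. cbv beta iota delta [xsurf v1c v2c v3c fst snd].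
  rewrite (DU P1 u v _ th H1), (DU P2 u v _ th H2), (DU P3 u v _ th H3). reflexivity. }
assert (Epv : pv x u v = (comp th (Ci * F z)%C, comp th (Ci * (Ci * F z))%C, comp th (Ci * - (F z * G z))%C)).
{ unfold pv, x. cbv beta iota delta [xsurf v1c v2c v3c fst snd].
  rewrite (DV P1 u v _ th H1), (DV P2 u v _ th H2), (DV P3 u v _ th H3). reflexivity. }
assert (Epupu : pu (pu x) u v = (comp th (C_derive F z), comp th (Ci * C_derive F z)%C,
     comp th (- (C_derive F z * G z + F z * C_derive G z))%C)).
{ unfold pu, x. cbv beta iota delta [xsurf v1c v2c v3c fst snd].
  rewrite (DDuu U P1 F _ th u v HUo Hz HP1 HFd).
  rewrite (DDuu U P2 _ _ th u v HUo Hz HP2 HR2).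
  rewrite (DDuu U P3 _ _ th u v HUo Hz HP3 HR3). reflexivity. }
assert (Epvpu : pv (pu x) u v = (comp th (Ci * C_derive F z)%C, comp th (Ci * (Ci * C_derive F z))%C,
     comp th (Ci * - (C_derive F z * G z + F z * C_derive G z))%C)).
{ unfold pv, pu, x. cbv beta iota delta [xsurf v1c v2c v3c fst snd].
  rewrite (DDuv U P1 F _ th u v HUo Hz HP1 HFd).
  rewrite (DDuv U P2 _ _ th u v HUo Hz HP2 HR2).
  rewrite (DDuv U P3 _ _ th u v HUo Hz HP3 HR3). reflexivity. }
assert (Epvpv : pv (pv x) u v = (comp th (Ci * (Ci * C_derive F z))%C, comp th (Ci * (Ci * (Ci * C_derive F z)))%C,
     comp th (Ci * (Ci * - (C_derive F z * G z + F z * C_derive G z)))%C)).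
{ unfold pv, x. cbv beta iota delta [xsurf v1c v2c v3c fst snd].
  rewrite (DDvv U P1 F _ th u v HUo Hz HP1 HFd).
  rewrite (DDvv U P2 _ _ th u v HUo Hz HP2 HR2).
  rewrite (DDvv U P3 _ _ th u v HUo Hz HP3 HR3). reflexivity. }
pose proof (HF0 z Hz) as Fnz.
destruct (F z) as [f1 f2] eqn:EF. destruct (G z) as [g1 g2] eqn:EG.
destruct (C_derive F z) as [d1 d2] eqn:ED. destruct (C_derive G z) as [e1 e2] eqn:EE.
assert (Hn : 0 < f1 ^ 2 + f2 ^ 2).
{ destruct (Req_dec f1 0) as [h1|h1].
  - destruct (Req_dec f2 0) as [h2|h2].
    + exfalso. apply Fnz. subst. reflexivity.
    + pose proof (pow2_gt_0 f2 h2). nra.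
  - pose proof (pow2_gt_0 f1 h1). nra. }
assert (Hcs : cos th ^ 2 + sin th ^ 2 = 1) by (pose proof (sin2_cos2 th) as Hsc; unfold Rsqr in Hsc; nra).
assert (MN : minimal_normal x u v = (g1, g2, 1)).
{ assert (Hex : exists N, is_minimal_normal x u v N).
  { exists (g1, g2, 1). unfold is_minimal_normal. rewrite Epu, Epv.
    unfold edot, v1c, v2c, v3c, comp, Ci; simpl. split; [reflexivity | split; ring]. }
  pose proof (epsilon_spec (inhabits ((0, 0, 1) : vec3)) (is_minimal_normal x u v) Hex) as Hs.
  fold (minimal_normal x u v) in Hs.
  destruct (minimal_normal x u v) as [[a b] c].
  destruct Hs as [Hc [Hu Hv]]. unfold v3c in Hc; simpl in Hc. subst c.
  rewrite Epu in Hu. rewrite Epv in Hv.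
  unfold edot, v1c, v2c, v3c, comp, Ci in Hu, Hv; simpl in Hu, Hv.
  pose (A := cos th * f1 + sin th * f2).
  pose (B := cos th * (0 * f1 - 1 * f2) + sin th * (0 * f2 + 1 * f1)).
  assert (HAB : A ^ 2 + B ^ 2 = f1 ^ 2 + f2 ^ 2).
  { unfold A, B. transitivity ((cos th ^ 2 + sin th ^ 2) * (f1 ^ 2 + f2 ^ 2)); [ring | rewrite Hcs; ring]. }
  assert (E1 : (a - g1) * A + (b - g2) * B = 0).
  { match type of Hu with ?L = _ => transitivity L; [unfold A, B; ring | exact Hu] end. }
  assert (E2 : (a - g1) * B - (b - g2) * A = 0).
  { match type of Hv with ?L = _ => transitivity L; [unfold A, B; ring | exact Hv] end. }
  assert (Ea : (a - g1) * (A ^ 2 + B ^ 2) = 0).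
  { replace ((a - g1) * (A ^ 2 + B ^ 2)) with (A * ((a - g1) * A + (b - g2) * B) + B * ((a - g1) * B - (b - g2) * A)) by ring.
    rewrite E1, E2; ring. }
  assert (Eb : (b - g2) * (A ^ 2 + B ^ 2) = 0).
  { replace ((b - g2) * (A ^ 2 + B ^ 2)) with (B * ((a - g1) * A + (b - g2) * B) - A * ((a - g1) * B - (b - g2) * A)) by ring.
    rewrite E1, E2; ring. }
  rewrite HAB in Ea, Eb.
  apply Rmult_integral in Ea. apply Rmult_integral in Eb.
  destruct Ea as [Ea|Ea]; [|lra]. destruct Eb as [Eb|Eb]; [|lra].
  replace a with g1 by lra. replace b with g2 by lra. reflexivity. }
unfold g11, g12, g22, h11, h12, h22, idot, edot. rewrite Epu, Epv, Epupu, Epvpu, Epvpv, MN.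
unfold v1c, v2c, v3c, comp, Ci; simpl.
repeat split.
- transitivity ((cos th ^ 2 + sin th ^ 2) * (f1 ^ 2 + f2 ^ 2)); [ring | rewrite Hcs; ring].
- ring.
- transitivity ((cos th ^ 2 + sin th ^ 2) * (f1 ^ 2 + f2 ^ 2)); [ring | rewrite Hcs; ring].
- ring.
- ring.
- ring.
Qed.

Lemma princ_alg n p q r a b : 0 < n -> (a, b) <> (0, 0) ->
  ((a, b) <> (0, 0) /\ exists lam : R,
     (n * p - 0 * q) / (n * n - 0 ^ 2) * a + (n * q - 0 * r) / (n * n - 0 ^ 2) * b = lam * a /\
     (- 0 * p + n * q) / (n * n - 0 ^ 2) * a + (- 0 * q + n * r) / (n * n - 0 ^ 2) * b = lam * b)
  <-> (p * a + q * b) * b - (q * a + r * b) * a = 0.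
Proof.
intros Hn Hab.
replace ((n * p - 0 * q) / (n * n - 0 ^ 2)) with (p / n) by (field; lra).
replace ((n * q - 0 * r) / (n * n - 0 ^ 2)) with (q / n) by (field; lra).
replace ((- 0 * p + n * q) / (n * n - 0 ^ 2)) with (q / n) by (field; lra).
replace ((- 0 * q + n * r) / (n * n - 0 ^ 2)) with (r / n) by (field; lra).
split.
- intros [_ [lam [E1 E2]]].
  assert (E : ((p * a + q * b) * b - (q * a + r * b) * a) / n = 0).
  { replace (((p * a + q * b) * b - (q * a + r * b) * a) / n) with
      ((p / n * a + q / n * b) * b - (q / n * a + r / n * b) * a) by (field; lra).
    rewrite E1, E2. ring. }
  replace ((p * a + q * b) * b - (q * a + r * b) * a) with
    (((p * a + q * b) * b - (q * a + r * b) * a) / n * n) by (field; lra).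
  rewrite E. ring.
- intros Hc. split; [exact Hab|].
  destruct (Req_dec a 0) as [Ha|Ha].
  + subst a. assert (Hb : b <> 0) by (intro; subst; apply Hab; reflexivity).
    exists (r / n). split.
    * assert (Hq : q * b * b = 0) by (rewrite <- Hc; ring).
      assert (q = 0).
      { destruct (Rmult_integral _ _ Hq) as [H|H]; [destruct (Rmult_integral _ _ H)|]; tauto. }
      subst q. field. lra.
    * field. lra.
  + exists ((p * a + q * b) / (n * a)). split.
    * field. split; lra.
    * replace ((p * a + q * b) / (n * a) * b) with ((p * a + q * b) * b / (n * a)) by (field; split; lra).
      replace ((p * a + q * b) * b) with ((q * a + r * b) * a) by lra. field. split; lra.
Qed.

Lemma emi_shift th : emi (th + PI / 2) = (- sin th, - cos th).
Proof.
unfold emi. rewrite cos_plus, sin_plus, cos_PI2, sin_PI2.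
apply injective_projections; simpl; ring.
Qed.

Theorem mainTheorem9 (U : C -> Prop) (F G P1 P2 P3 : C -> C) :
  open U ->
  holomorphic_on U F -> holomorphic_on U G ->
  (forall z, U z -> F z <> 0%C) ->
  (forall z, U z ->
     is_derive (K := C_AbsRing) P1 z (F z) /\
     is_derive (K := C_AbsRing) P2 z (Ci * F z)%C /\
     is_derive (K := C_AbsRing) P3 z (- (F z * G z))%C) ->
  (* (i) *)
  (forall th u v, U (u, v) ->
     g11 (xsurf th P1 P2 P3) u v = Cmod (F (u, v)) ^ 2 /\
     g12 (xsurf th P1 P2 P3) u v = 0 /\
     g22 (xsurf th P1 P2 P3) u v = Cmod (F (u, v)) ^ 2) /\
  (* (ii) *)
  (forall th u v a b, U (u, v) -> (a, b) <> (0, 0) ->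
     (asymptotic (xsurf th P1 P2 P3) u v a b <->
      Re (emi th * F (u, v) * C_derive G (u, v) * ((a, b) * (a, b)))%C = 0)) /\
  (* (iii) *)
  (forall th u v a b, U (u, v) -> (F (u, v) * C_derive G (u, v))%C <> 0%C ->
     (a, b) <> (0, 0) ->
     (principal (xsurf th P1 P2 P3) u v a b <->
      Im (emi th * F (u, v) * C_derive G (u, v) * ((a, b) * (a, b)))%C = 0)) /\
  (* (iv) *)
  (forall th u v a b, U (u, v) -> (F (u, v) * C_derive G (u, v))%C <> 0%C ->
     (a, b) <> (0, 0) ->
     (asymptotic (xsurf th P1 P2 P3) u v a b ->
        principal (xsurf (th + PI / 2) P1 P2 P3) u v a b) /\
     (principal (xsurf th P1 P2 P3) u v a b ->
        asymptotic (xsurf (th + PI / 2) P1 P2 P3) u v a b)).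
Proof.
intros HUo HF HG HF0 HP.
assert (PII : forall th u v a b, U (u, v) -> (a, b) <> (0, 0) ->
     (asymptotic (xsurf th P1 P2 P3) u v a b <->
      Re (emi th * F (u, v) * C_derive G (u, v) * ((a, b) * (a, b)))%C = 0)).
{ intros th u v a b Hz Hab.
  destruct (data U F G P1 P2 P3 th u v HUo HF HG HF0 HP Hz) as [_ [_ [_ [E11 [E12 E22]]]]].
  unfold asymptotic, II. rewrite E11, E12, E22.
  destruct (F (u, v)) as [f1 f2]. destruct (C_derive G (u, v)) as [e1 e2].
  unfold comp, emi, Ci, Re, Cmult; simpl.
  match goal with |- (?L = 0) <-> (?R = 0) => assert (Hid : L = - R) by ring end.
  rewrite Hid. split; intro Hx; [lra | rewrite Hx; ring]. }
assert (PIII : forall th u v a b, U (u, v) -> (F (u, v) * C_derive G (u, v))%C <> 0%C ->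
     (a, b) <> (0, 0) ->
     (principal (xsurf th P1 P2 P3) u v a b <->
      Im (emi th * F (u, v) * C_derive G (u, v) * ((a, b) * (a, b)))%C = 0)).
{ intros th u v a b Hz _ Hab.
  destruct (data U F G P1 P2 P3 th u v HUo HF HG HF0 HP Hz) as [E1 [E2 [E3 [E11 [E12 E22]]]]].
  assert (Hn : 0 < fst (F (u, v)) ^ 2 + snd (F (u, v)) ^ 2).
  { pose proof (HF0 _ Hz) as Fnz. destruct (F (u, v)) as [f1 f2]; simpl.
    destruct (Req_dec f1 0) as [h1|h1].
    - destruct (Req_dec f2 0) as [h2|h2].
      + exfalso. apply Fnz. subst. reflexivity.
      + pose proof (pow2_gt_0 f2 h2). nra.
    - pose proof (pow2_gt_0 f1 h1). nra. }
  unfold principal, S11, S12, S21, S22, detg. rewrite E1, E2, E3, E11, E12, E22.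
  rewrite (princ_alg _ _ _ _ a b Hn Hab).
  destruct (F (u, v)) as [f1 f2]. destruct (C_derive G (u, v)) as [e1 e2].
  unfold comp, emi, Ci, Im, Cmult; simpl.
  match goal with |- (?L = 0) <-> (?R = 0) => assert (Hid : L = - R) by ring end.
  rewrite Hid. split; intro Hx; [lra | rewrite Hx; ring]. }
split; [|split; [exact PII|split; [exact PIII|]]].
- intros th u v H.
  destruct (data U F G P1 P2 P3 th u v HUo HF HG HF0 HP H) as [E1 [E2 [E3 _]]].
  rewrite E1, E2, E3. unfold Cmod. rewrite pow2_sqrt; [|nra]. split; [reflexivity|split; reflexivity].
- intros th u v a b H H0 H1. split.
  + intros Has. apply (PIII (th + PI / 2) u v a b H H0 H1). apply (PII th u v a b H H1) in Has.
    rewrite emi_shift. revert Has. unfold emi.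
    destruct (F (u, v)) as [f1 f2]. destruct (C_derive G (u, v)) as [e1 e2].
    unfold Re, Im, Cmult; simpl. intros Has.
    match goal with |- ?L = 0 => match type of Has with ?R = 0 => assert (Hid : L = - R) by ring end end.
    rewrite Hid, Has. ring.
  + intros Hpr. apply (PII (th + PI / 2) u v a b H H1). apply (PIII th u v a b H H0 H1) in Hpr.
    rewrite emi_shift. revert Hpr. unfold emi.
    destruct (F (u, v)) as [f1 f2]. destruct (C_derive G (u, v)) as [e1 e2].
    unfold Re, Im, Cmult; simpl. intros Hpr.
    match goal with |- ?L = 0 => match type of Hpr with ?R = 0 => assert (Hid : L = R) by ring end end.
    rewrite Hid, Hpr. reflexivity.
Qed.
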